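(* A general binary quartic $p\in H_4(\mathbb{C}^2)$ can be written as $$p(x,y) = (t_1x^2+t_2xy+t_3y^2)^2 + (t_4x+t_5y)^4, \qquad t_i\in\mathbb{C},$$ in exactly six different ways. Moreover, the set of the six resulting ratios $t_5/t_4\in\mathbb{C}\cup\{\infty\}$ is the image of the set $\{0,\infty,1,-1,i,-i\}$ under a Möbius transformation.
   Context: $H_d(\mathbb{C}^n)$ denotes the complex vector space of homogeneous polynomials of degree $d$ in $n$ variables. ''A general $p$ has property P'' means P holds for all $p$ in a nonempty Zariski-open subset of $H_d(\mathbb{C}^n)$. Two representations are considered the same if they agree up to replacing the quadratic form by its negative and replacing the linear form $\ell$ by $\zeta\ell$ with $\zeta^4=1$. *)

(* Defs.v *)
From HB Require Import structures.
From mathcomp Require Import all_boot all_order all_algebra.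
Set Implicit Arguments. Unset Strict Implicit. Unset Printing Implicit Defensive.
Import Order.TTheory GRing.Theory Num.Theory.
Local Open Scope ring_scope.

(* A binary quartic p in H_4(C^2) is given by its 5 coefficients a : 'I_5 -> C:
   p(x,y) = sum_{i<5} a_i x^(4-i) y^i. *)
Definition qeval (C : numClosedFieldType) (a : 'I_5 -> C) (x y : C) : C :=
  \sum_(i < 5) a i * x ^+ (4 - i) * y ^+ i.

(* Polynomials in 5 variables (the coordinates a_0..a_4 of H_4(C^2)),
   as iterated univariate polynomials. *)
Definition poly5 (C : numClosedFieldType) :=
  {poly {poly {poly {poly {poly C}}}}}.

Definition eval5 (C : numClosedFieldType) (f : poly5 C) (a : 'I_5 -> C) : C :=
  ((((f.[(a (inord 4))%:P%:P%:P%:P]).[(a (inord 3))%:P%:P%:P]).[(a (inord 2))%:P%:P]).[(a (inord 1))%:P]).[a (inord 0)].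

(* "A general p has property P": P holds on a nonempty Zariski-open subset of
   H_4(C^2), i.e. on a basic open set {a | f(a) <> 0} for a nonzero polynomial f. *)
Definition general (C : numClosedFieldType) (P : ('I_5 -> C) -> Prop) : Prop :=
  exists f : poly5 C, f != 0 /\ forall a, eval5 f a != 0 -> P a.

(* t : 'I_5 -> C encodes (t_1,...,t_5) as (t 0, ..., t 4). *)
Definition represents (C : numClosedFieldType) (a t : 'I_5 -> C) : Prop :=
  forall x y : C,
    qeval a x y =
      (t (inord 0) * x ^+ 2 + t (inord 1) * x * y + t (inord 2) * y ^+ 2) ^+ 2
      + (t (inord 3) * x + t (inord 4) * y) ^+ 4.

Definition same_rep (C : numClosedFieldType) (t s : 'I_5 -> C) : Prop :=
  exists eps zeta : C, (eps = 1 \/ eps = -1) /\ zeta ^+ 4 = 1 /\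
    s (inord 0) = eps * t (inord 0) /\ s (inord 1) = eps * t (inord 1) /\ s (inord 2) = eps * t (inord 2) /\
    s (inord 3) = zeta * t (inord 3) /\ s (inord 4) = zeta * t (inord 4).

(* Points of P^1 = C u {oo} in homogeneous coordinates (u, v) <-> ratio v/u. *)
Definition proj_eq (C : numClosedFieldType) (P Q : C * C) : Prop :=
  P.1 * Q.2 = P.2 * Q.1.

Definition six_pts (C : numClosedFieldType) (j : 'I_6) : C * C :=
  match val j with
  | 0 => (1, 0)
  | 1 => (0, 1)
  | 2 => (1, 1)
  | 3 => (1, -1)
  | 4 => (1, 'i)
  | _ => (1, - 'i)
  end.

Definition mob_act (C : numClosedFieldType) (M : 'M[C]_2) (P : C * C) : C * C :=
  (M 0 0 * P.1 + M 0 1 * P.2, M 1 0 * P.1 + M 1 1 * P.2).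

(* Main.v *)
Require Import Defs.
From HB Require Import structures.
From mathcomp Require Import all_boot all_order all_algebra.
From mathcomp Require Import ring.
Import Order.TTheory GRing.Theory Num.Theory.
Local Open Scope ring_scope.

Definition IG {R : comRingType} (a b c d e : R) : R := 12*a*e - 3*b*d + c^+2.
Definition JG {R : comRingType} (a b c d e : R) : R :=
  72*a*c*e + 9*b*c*d - 27*a*d^+2 - 27*e*b^+2 - 2*c^+3.
Definition RG {R : comRingType} (a b c d : R) : R := - b ^+ 3 + 4 * a * b * c - 8 * a ^+ 2 * d.
Definition fG {R : comRingType} (a b c d e : R) : R :=
  a * (4 * IG a b c d e ^+ 3 - JG a b c d e ^+ 2) * RG a b c d.

Lemma hom_fG (R S : comRingType) (phi : R -> S) :
  (forall x y, phi (x + y) = phi x + phi y) -> (forall x, phi (- x) = - phi x) ->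
  (forall x y, phi (x * y) = phi x * phi y) -> phi 1 = 1 ->
  forall a b c d e, phi (fG a b c d e) = fG (phi a) (phi b) (phi c) (phi d) (phi e).
Proof.
move=> hD hN hM h1.
have h0 : phi 0 = 0.
  have := hD 0 0; rewrite addr0 => e; apply: (addrI (phi 0)).
  by rewrite -e addr0.
have hn : forall n, phi n%:R = n%:R.
  by elim=> [|n IH]; rewrite ?h0 // -addn1 !natrD hD IH h1.
have hX : forall x n, phi (x ^+ n) = phi x ^+ n.
  by move=> x; elim=> [|n IH]; rewrite ?expr0 ?h1 // !exprS hM IH.
move=> a b c d e.
by rewrite /fG /IG /JG /RG !(hD, hN, hM, hX, hn).
Qed.

Set Implicit Arguments.
Unset Strict Implicit.
Section S.
Variable C : numClosedFieldType.

Definition mk5 (t0 t1 t2 t3 t4 : C) : 'I_5 -> C :=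
  fun i => nth 0 [:: t0; t1; t2; t3; t4] i.

Lemma mk5E t0 t1 t2 t3 t4 :
  [/\ mk5 t0 t1 t2 t3 t4 (inord 0) = t0, mk5 t0 t1 t2 t3 t4 (inord 1) = t1,
      mk5 t0 t1 t2 t3 t4 (inord 2) = t2, mk5 t0 t1 t2 t3 t4 (inord 3) = t3
    & mk5 t0 t1 t2 t3 t4 (inord 4) = t4].
Proof. by rewrite /mk5 !inordK. Qed.

Lemma qevalE (a : 'I_5 -> C) (x y : C) : qeval a x y =
  a (inord 0) * x ^+ 4 + a (inord 1) * x ^+ 3 * y + a (inord 2) * x ^+ 2 * y ^+ 2
  + a (inord 3) * x * y ^+ 3 + a (inord 4) * y ^+ 4.
Proof.
rewrite /qeval (eq_bigr (fun i : 'I_5 => a (inord i) * x ^+ (4 - i) * y ^+ i)); last first.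
  by move=> i _; rewrite inord_val.
rewrite !big_ord_recl big_ord0 /=.
rewrite /=. ring.
Qed.

Lemma two_neq0 : (2 : C) != 0. Proof. by rewrite pnatr_eq0. Qed.

Lemma poly4_0 (c0 c1 c2 c3 c4 : C) :
  (forall z : C, c0 * z ^+ 4 + c1 * z ^+ 3 + c2 * z ^+ 2 + c3 * z + c4 = 0) ->
  [/\ c0 = 0, c1 = 0, c2 = 0, c3 = 0 & c4 = 0].
Proof.
move=> H.
have h0 := H 0. have h1 := H 1. have h2 := H (-1). have h3 := H 2. have h4 := H (-2).
have e4 : c4 = 0 by rewrite -h0; ring.
have e02 : 2 * (c0 + c2) = 0 by rewrite -[RHS](addr0 0) -{1}h1 -h2 e4; ring.
have e13 : 2 * (c1 + c3) = 0 by rewrite -[RHS](subr0 0) -{1}h1 -h2 e4; ring.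
have e02' : c0 + c2 = 0 by move/eqP: e02; rewrite mulf_eq0 (negbTE two_neq0) => /eqP.
have e13' : c1 + c3 = 0 by move/eqP: e13; rewrite mulf_eq0 (negbTE two_neq0) => /eqP.
have e0 : 24 * c0 = 0.
  by rewrite -[RHS](addr0 0) -{1}h3 -h4 e4 -[c2](addKr c0) e02'; ring.
have e1 : 12 * c1 = 0.
  by rewrite -[RHS](subr0 0) -{1}h3 -h4 e4 -[c3](addKr c1) e13'; ring.
have c0z : c0 = 0 by move/eqP: e0; rewrite mulf_eq0 pnatr_eq0 /= => /eqP.
have c1z : c1 = 0 by move/eqP: e1; rewrite mulf_eq0 pnatr_eq0 /= => /eqP.
split => //.
- by rewrite -[c2](addKr c0) e02' c0z; ring.
- by rewrite -[c3](addKr c1) e13' c1z; ring.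
Qed.


Lemma roots4 (c1 c2 c3 c4 : C) : exists r1 r2 r3 r4 : C, forall z : C,
  z ^+ 4 + c1 * z ^+ 3 + c2 * z ^+ 2 + c3 * z + c4 = (z - r1) * (z - r2) * (z - r3) * (z - r4).
Proof.
pose p := Poly [:: c4; c3; c2; c1; 1].
have sp : p = [:: c4; c3; c2; c1; 1] :> seq C by apply: (@PolyK _ 0); rewrite /= oner_neq0.
have lp : lead_coef p = 1 by rewrite lead_coefE sp.
case: (closed_field_poly_normal p) => rs Hp.
rewrite lp scale1r in Hp.
have Hs : size rs = 4%N.
  by have := congr1 (fun q : {poly C} => size q) Hp; rewrite /= sp size_prod_XsubC => -[].
case: rs Hp Hs => [|r1 [|r2 [|r3 [|r4 [|? ?]]]]] // Hp _.
exists r1, r2, r3, r4 => z.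
have := congr1 (fun q => q.[z]) Hp.
move=> e.
change (Poly _) with (cons_poly c4 (cons_poly c3 (cons_poly c2 (cons_poly c1 (cons_poly 1 0))))) in e.
rewrite !horner_cons horner0 !big_cons big_nil mulr1 !hornerM !hornerD !hornerN !hornerX !hornerC in e.
rewrite !mulrA in e; rewrite -e; ring.
Qed.

Local Notation "t '@@' k" := (t (@inord 4 k)) (at level 8, k at level 0, format "t @@ k").

Lemma eq_sub0 (x y z : C) : x = y -> z = x - y -> z = 0.
Proof. by move=> -> ->; rewrite subrr. Qed.
Arguments eq_sub0 {x y z}.

Lemma repE (a t : 'I_5 -> C) : represents a t ->
  [/\ a@@0 = t@@0 ^+ 2 + t@@3 ^+ 4,
      a@@1 = 2 * t@@0 * t@@1 + 4 * t@@3 ^+ 3 * t@@4,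
      a@@2 = t@@1 ^+ 2 + 2 * t@@0 * t@@2 + 6 * t@@3 ^+ 2 * t@@4 ^+ 2,
      a@@3 = 2 * t@@1 * t@@2 + 4 * t@@3 * t@@4 ^+ 3
    & a@@4 = t@@2 ^+ 2 + t@@4 ^+ 4].
Proof.
move=> H.
destruct (@poly4_0 (a@@0 - (t@@0 ^+ 2 + t@@3 ^+ 4))
  (a@@1 - (2 * t@@0 * t@@1 + 4 * t@@3 ^+ 3 * t@@4))
  (a@@2 - (t@@1 ^+ 2 + 2 * t@@0 * t@@2 + 6 * t@@3 ^+ 2 * t@@4 ^+ 2))
  (a@@3 - (2 * t@@1 * t@@2 + 4 * t@@3 * t@@4 ^+ 3))
  (a@@4 - (t@@2 ^+ 2 + t@@4 ^+ 4))) as [h0 h1 h2 h3 h4].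
  1: move=> z; apply: (eq_sub0 (etrans (esym (qevalE a z 1)) (H z 1))); ring.
by split; apply/eqP; rewrite -subr_eq0; apply/eqP.
Qed.
Arguments repE {a t}.

Lemma uniq_core (e x0 t0 t1 t2 u0 u1 u2 : C) : e ^+ 2 = 1 ->
  t0 * x0 ^+ 2 + t1 * x0 + t2 != 0 ->
  u0 * x0 ^+ 2 + u1 * x0 + u2 = e * (t0 * x0 ^+ 2 + t1 * x0 + t2) ->
  (t0 * x0 ^+ 2 + t1 * x0 + t2) * (2 * t0 * x0 + t1) =
    (u0 * x0 ^+ 2 + u1 * x0 + u2) * (2 * u0 * x0 + u1) ->
  (2 * t0 * x0 + t1) ^+ 2 + 2 * t0 * (t0 * x0 ^+ 2 + t1 * x0 + t2) =
    (2 * u0 * x0 + u1) ^+ 2 + 2 * u0 * (u0 * x0 ^+ 2 + u1 * x0 + u2) ->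
  [/\ u0 = e * t0, u1 = e * t1 & u2 = e * t2].
Proof.
set G2 := t0 * x0 ^+ 2 + t1 * x0 + t2; set G2' := u0 * x0 ^+ 2 + u1 * x0 + u2.
set G1 := 2 * t0 * x0 + t1; set G1' := 2 * u0 * x0 + u1.
move=> e2 nz hG2 hG1 hG0.
rewrite hG2 in hG1 hG0.
have g1 : G1 = e * G1'.
  by apply: (mulfI nz); rewrite hG1; ring.
have g1' : G1' = e * G1 by rewrite g1 mulrA -expr2 e2 mul1r.
rewrite g1' in hG0.
have h0 : (2 * G2) * t0 = (2 * G2) * (u0 * e).
  have -> : 2 * G2 * t0 = ((G1 ^+ 2 + 2 * t0 * G2) - G1 ^+ 2) by ring.
  by rewrite hG0 exprMn e2; ring.
have nz2 : 2 * G2 != 0 by rewrite mulf_neq0 // two_neq0.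
have t0e : t0 = u0 * e by apply: (mulfI nz2).
have u0e : u0 = e * t0 by rewrite t0e mulrCA -expr2 e2 mulr1.
have u1e : u1 = e * t1.
  have -> : u1 = G1' - 2 * u0 * x0 by rewrite /G1'; ring.
  by rewrite g1' u0e /G1; ring.
split => //.
have -> : u2 = G2' - u0 * x0 ^+ 2 - u1 * x0 by rewrite /G2'; ring.
by rewrite hG2 u0e u1e /G2; ring.
Qed.
Arguments uniq_core {e x0 t0 t1 t2 u0 u1 u2}.

Definition pv (a : 'I_5 -> C) (z : C) :=
  a@@0 * z ^+ 4 + a@@1 * z ^+ 3 + a@@2 * z ^+ 2 + a@@3 * z + a@@4.

Lemma sqr_eq_cases (x y : C) : x ^+ 2 = y ^+ 2 -> y = x \/ y = - x.
Proof.
move=> h; have : (y - x) * (y + x) = 0 by rewrite -subr_sqr h subrr.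
by move/eqP; rewrite mulf_eq0 subr_eq0 addr_eq0 => /orP[/eqP|/eqP]; [left|right].
Qed.
Arguments sqr_eq_cases {x y}.

Lemma uniq_rep (a t t' : 'I_5 -> C) tau : represents a t -> represents a t' ->
  t@@3 != 0 -> t@@4 = tau * t@@3 -> t'@@4 = tau * t'@@3 -> pv a (- tau) != 0 ->
  same_rep t t'.
Proof.
move=> Ht Ht' nz3 h4 h4' nzp.
case: (repE Ht) => e0 e1 e2 e3 e4; case: (repE Ht') => f0 f1 f2 f3 f4.
set x0 := - tau.
have P1 : pv a x0 = (t@@0 * x0 ^+ 2 + t@@1 * x0 + t@@2) ^+ 2.
  by rewrite /pv ?e0 ?e1 ?e2 ?e3 ?e4 h4 /x0; ring.
have P1' : pv a x0 = (t'@@0 * x0 ^+ 2 + t'@@1 * x0 + t'@@2) ^+ 2.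
  by rewrite /pv ?f0 ?f1 ?f2 ?f3 ?f4 h4' /x0; ring.
have P2 : 4 * a@@0 * x0 ^+ 3 + 3 * a@@1 * x0 ^+ 2 + 2 * a@@2 * x0 + a@@3 =
   2 * ((t@@0 * x0 ^+ 2 + t@@1 * x0 + t@@2) * (2 * t@@0 * x0 + t@@1)).
  by rewrite ?e0 ?e1 ?e2 ?e3 ?e4 h4 /x0; ring.
have P2' : 4 * a@@0 * x0 ^+ 3 + 3 * a@@1 * x0 ^+ 2 + 2 * a@@2 * x0 + a@@3 =
   2 * ((t'@@0 * x0 ^+ 2 + t'@@1 * x0 + t'@@2) * (2 * t'@@0 * x0 + t'@@1)).
  by rewrite ?f0 ?f1 ?f2 ?f3 ?f4 h4' /x0; ring.
have P3 : 6 * a@@0 * x0 ^+ 2 + 3 * a@@1 * x0 + a@@2 =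
   (2 * t@@0 * x0 + t@@1) ^+ 2 + 2 * t@@0 * (t@@0 * x0 ^+ 2 + t@@1 * x0 + t@@2).
  by rewrite ?e0 ?e1 ?e2 ?e3 ?e4 h4 /x0; ring.
have P3' : 6 * a@@0 * x0 ^+ 2 + 3 * a@@1 * x0 + a@@2 =
   (2 * t'@@0 * x0 + t'@@1) ^+ 2 + 2 * t'@@0 * (t'@@0 * x0 ^+ 2 + t'@@1 * x0 + t'@@2).
  by rewrite ?f0 ?f1 ?f2 ?f3 ?f4 h4' /x0; ring.
have nzG : t@@0 * x0 ^+ 2 + t@@1 * x0 + t@@2 != 0.
  by apply: contra nzp; rewrite P1 => /eqP ->; rewrite expr0n.
have hG1 : (t@@0 * x0 ^+ 2 + t@@1 * x0 + t@@2) * (2 * t@@0 * x0 + t@@1) =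
    (t'@@0 * x0 ^+ 2 + t'@@1 * x0 + t'@@2) * (2 * t'@@0 * x0 + t'@@1).
  by apply: (mulfI two_neq0); rewrite -P2 -P2'.
have hG0 := etrans (esym P3) P3'.
have [e [ee2 hG2]] : exists e : C, e ^+ 2 = 1 /\
    t'@@0 * x0 ^+ 2 + t'@@1 * x0 + t'@@2 = e * (t@@0 * x0 ^+ 2 + t@@1 * x0 + t@@2).
  case: (sqr_eq_cases (etrans (esym P1) P1')) => ->.
    by exists 1; rewrite expr1n mul1r.
  by exists (-1); rewrite sqrrN expr1n mulN1r.
have [u0 u1 u2] := uniq_core ee2 nzG hG2 hG1 hG0.
have h34 : t'@@3 ^+ 4 = t@@3 ^+ 4.
  have : t@@0 ^+ 2 + t@@3 ^+ 4 = t'@@0 ^+ 2 + t'@@3 ^+ 4 by rewrite -e0 -f0.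
  by rewrite u0 exprMn ee2 mul1r => /addrI ->.
exists e, (t'@@3 / t@@3); do !split.
- have : 1 ^+ 2 = e ^+ 2 by rewrite expr1n.
  by case/sqr_eq_cases => ->; [left|right].
- by rewrite expr_div_n h34 divff // expf_neq0.
- by [].
- by [].
- by [].
- by rewrite divfK.
- by rewrite h4' h4; field.
Qed.

Definition Dp (r1 r2 r3 r4 : C) := (r1 + r2) - (r3 + r4).
Definition Ep (r1 r2 r3 r4 : C) := r1 * r2 - r3 * r4.
Definition Gp (r1 r2 r3 r4 : C) := (r3 + r4) * (r1 * r2) - (r1 + r2) * (r3 * r4).
Definition Fs (r1 r2 r3 r4 tau : C) :=
  Dp r1 r2 r3 r4 * tau ^+ 2 + 2 * Ep r1 r2 r3 r4 * tau + Gp r1 r2 r3 r4.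

Lemma Fs_disc r1 r2 r3 r4 : Ep r1 r2 r3 r4 ^+ 2 - Dp r1 r2 r3 r4 * Gp r1 r2 r3 r4 =
  (r1 - r3) * (r1 - r4) * (r2 - r3) * (r2 - r4).
Proof. rewrite /Ep /Dp /Gp; ring. Qed.

Lemma Fs_at r1 r2 r3 r4 :
  [/\ Fs r1 r2 r3 r4 (- r1) = (r1 - r2) * (r1 - r3) * (r1 - r4),
      Fs r1 r2 r3 r4 (- r2) = (r2 - r1) * (r2 - r3) * (r2 - r4),
      Fs r1 r2 r3 r4 (- r3) = - ((r3 - r1) * (r3 - r2) * (r3 - r4))
    & Fs r1 r2 r3 r4 (- r4) = - ((r4 - r1) * (r4 - r2) * (r4 - r3))].
Proof. rewrite /Fs /Ep /Dp /Gp; split; ring. Qed.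

Lemma Fs_swap r1 r2 r3 r4 tau : Fs r3 r4 r1 r2 tau = - Fs r1 r2 r3 r4 tau.
Proof. rewrite /Fs /Ep /Dp /Gp; ring. Qed.

Definition taup r1 r2 r3 r4 :=
  (- Ep r1 r2 r3 r4 + sqrtC (Ep r1 r2 r3 r4 ^+ 2 - Dp r1 r2 r3 r4 * Gp r1 r2 r3 r4)) / Dp r1 r2 r3 r4.
Definition taum r1 r2 r3 r4 :=
  (- Ep r1 r2 r3 r4 - sqrtC (Ep r1 r2 r3 r4 ^+ 2 - Dp r1 r2 r3 r4 * Gp r1 r2 r3 r4)) / Dp r1 r2 r3 r4.

Lemma Fs_fact r1 r2 r3 r4 tau : Dp r1 r2 r3 r4 != 0 ->
  Fs r1 r2 r3 r4 tau = Dp r1 r2 r3 r4 * (tau - taup r1 r2 r3 r4) * (tau - taum r1 r2 r3 r4).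
Proof.
rewrite /Fs /taup /taum.
set D := Dp _ _ _ _; set E := Ep _ _ _ _; set G := Gp _ _ _ _ => nzD.
set d := sqrtC _.
have hd : d ^+ 2 = E ^+ 2 - D * G by rewrite sqrtCK.
have -> : D * (tau - (- E + d) / D) * (tau - (- E - d) / D) =
   D * tau ^+ 2 + 2 * E * tau + (E ^+ 2 - d ^+ 2) / D by field.
by rewrite hd; field.
Qed.
Arguments Fs_fact {r1 r2 r3 r4} tau.

Lemma Fs_roots r1 r2 r3 r4 : Dp r1 r2 r3 r4 != 0 ->
  (r1 - r3) * (r1 - r4) * (r2 - r3) * (r2 - r4) != 0 ->
  [/\ Fs r1 r2 r3 r4 (taup r1 r2 r3 r4) = 0, Fs r1 r2 r3 r4 (taum r1 r2 r3 r4) = 0,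
      taup r1 r2 r3 r4 != taum r1 r2 r3 r4,
      Dp r1 r2 r3 r4 * (taup r1 r2 r3 r4 + taum r1 r2 r3 r4) = - (2 * Ep r1 r2 r3 r4)
    & Dp r1 r2 r3 r4 * (taup r1 r2 r3 r4 * taum r1 r2 r3 r4) = Gp r1 r2 r3 r4].
Proof.
move=> nzD nzd.
rewrite (Fs_fact (taup _ _ _ _) nzD) (Fs_fact (taum _ _ _ _) nzD) !subrr !mulr0 mul0r.
rewrite /taup /taum.
set D := Dp _ _ _ _; set E := Ep _ _ _ _; set G := Gp _ _ _ _.
rewrite -Fs_disc -/D -/E -/G in nzd.
set d := sqrtC _.
have hd : d ^+ 2 = E ^+ 2 - D * G by rewrite sqrtCK.
have nzd' : d != 0 by apply: contra nzd => /eqP d0; rewrite -hd d0 expr0n.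
split => //.
- apply: contra nzd' => /eqP e.
  have : (- E + d) / D * D = (- E - d) / D * D by rewrite e.
  rewrite !divfK // => /eqP; rewrite -subr_eq0.
  have -> : - E + d - (- E - d) = 2 * d by ring.
  by rewrite mulf_eq0 (negbTE two_neq0).
- by field.
- have -> : D * ((- E + d) / D * ((- E - d) / D)) = (E ^+ 2 - d ^+ 2) / D by field.
  by rewrite hd; field.
Qed.

Lemma i_neq0 : 'i != 0 :> C.
Proof.
apply/eqP => h; have := sqrCi C; rewrite h expr0n => /eqP.
by rewrite eq_sym oppr_eq0 oner_eq0.
Qed.

Ltac fside := rewrite ?two_neq0 ?i_neq0 ?andbT ?andTb; try done;
  repeat (apply/andP; split); try done.

Lemma rep_form (a0 lam al be D P Q L s4 : C) : al != 0 -> be != 0 -> lam != 0 -> D != 0 ->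
  lam ^+ 2 = a0 * al / be -> s4 = - (a0 * D) ^+ 2 / (4 * lam ^+ 2 * be ^+ 2) ->
  D * L ^+ 2 = al * P - be * Q ->
  ((lam * P + a0 * Q / lam) / 2) ^+ 2 + s4 * L ^+ 4 = a0 * P * Q.
Proof.
move=> nal nbe nlam nD hl -> hDL.
have a0e : a0 = lam ^+ 2 * be / al by rewrite hl; field; fside.
have L4 : L ^+ 4 = (D * L ^+ 2) ^+ 2 / D ^+ 2 by field; fside.
rewrite L4 hDL a0e.
by field; fside.
Qed.
Arguments rep_form {a0 lam al be D P Q L s4}.

Lemma s4_lem (s a0 D l be : C) : l != 0 -> be != 0 ->
  s ^+ 2 = a0 * D / (2 * 'i * l * be) -> s ^+ 4 = - (a0 * D) ^+ 2 / (4 * l ^+ 2 * be ^+ 2).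
Proof.
move=> nl nbe hs.
have -> : s ^+ 4 = (s ^+ 2) ^+ 2 by rewrite -exprM.
rewrite hs.
have -> : (a0 * D / (2 * 'i * l * be)) ^+ 2 = (a0 * D) ^+ 2 / (4 * 'i ^+ 2 * l ^+ 2 * be ^+ 2).
  by field; fside.
by rewrite sqrCi; field; fside.
Qed.
Arguments s4_lem {s a0 D l be}.

Definition alp (r3 r4 tau : C) := - (2 * tau + (r3 + r4)).
Definition bet (r1 r2 tau : C) := - (2 * tau + (r1 + r2)).
Definition lam (a0 r1 r2 r3 r4 tau : C) := sqrtC (a0 * alp r3 r4 tau / bet r1 r2 tau).
Definition sv (a0 r1 r2 r3 r4 tau : C) :=
  sqrtC (a0 * Dp r1 r2 r3 r4 / (2 * 'i * lam a0 r1 r2 r3 r4 tau * bet r1 r2 tau)).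
Definition prep (a0 r1 r2 r3 r4 tau : C) : 'I_5 -> C :=
  let l := lam a0 r1 r2 r3 r4 tau in let s := sv a0 r1 r2 r3 r4 tau in
  mk5 ((l + a0 / l) / 2) (- (l * (r1 + r2) + a0 * (r3 + r4) / l) / 2)
      ((l * (r1 * r2) + a0 * (r3 * r4) / l) / 2) s (s * tau).



Lemma prep_ok a0 r1 r2 r3 r4 tau : a0 != 0 -> Dp r1 r2 r3 r4 != 0 -> r1 != r2 -> r3 != r4 ->
  Fs r1 r2 r3 r4 tau = 0 ->
  let t := prep a0 r1 r2 r3 r4 tau in
  [/\ forall x y : C,
      (t@@0 * x ^+ 2 + t@@1 * x * y + t@@2 * y ^+ 2) ^+ 2 + (t@@3 * x + t@@4 * y) ^+ 4 =
      a0 * (x - r1 * y) * (x - r2 * y) * (x - r3 * y) * (x - r4 * y),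
      t@@3 != 0 & t@@4 = tau * t@@3].
Proof.
move=> na0 nD n12 n34 hF t.
have [e0 e1 e2 e3 e4] := mk5E
  ((lam a0 r1 r2 r3 r4 tau + a0 / lam a0 r1 r2 r3 r4 tau) / 2)
  (- (lam a0 r1 r2 r3 r4 tau * (r1 + r2) + a0 * (r3 + r4) / lam a0 r1 r2 r3 r4 tau) / 2)
  ((lam a0 r1 r2 r3 r4 tau * (r1 * r2) + a0 * (r3 * r4) / lam a0 r1 r2 r3 r4 tau) / 2)
  (sv a0 r1 r2 r3 r4 tau) (sv a0 r1 r2 r3 r4 tau * tau).
rewrite /t /prep /= e0 e1 e2 e3 e4.
set l := lam _ _ _ _ _ _; set s := sv _ _ _ _ _ _.
set al := alp r3 r4 tau; set be := bet r1 r2 tau; set D := Dp r1 r2 r3 r4.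
have nal : al != 0.
  apply/eqP => h; move: n34; rewrite -subr_eq0 => /negP; apply.
  have : 4 * Fs r1 r2 r3 r4 tau = D * (r3 - r4) ^+ 2 - 2 * al * (D * (tau - (r3 + r4) / 2) + 2 * Ep r1 r2 r3 r4).
    by rewrite /Fs /al /alp /D /Dp /Ep /Gp; field; fside.
  rewrite hF h !mulr0 !mul0r subr0 => /esym/eqP; rewrite mulf_eq0 (negbTE nD) /=.
  by rewrite expf_eq0.
have nbe : be != 0.
  apply/eqP => h; move: n12; rewrite -subr_eq0 => /negP; apply.
  have : 4 * Fs r1 r2 r3 r4 tau = D * (r1 - r2) ^+ 2 - 2 * be * (D * (tau - (r1 + r2) / 2) + 2 * Ep r1 r2 r3 r4).
    by rewrite /Fs /be /bet /D /Dp /Ep /Gp; field; fside.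
  rewrite hF h !mulr0 !mul0r subr0 => /esym/eqP; rewrite mulf_eq0 (negbTE nD) /=.
  by rewrite expf_eq0.
have hl : l ^+ 2 = a0 * al / be by rewrite /l /lam sqrtCK.
have nl : l != 0.
  apply/eqP => h; move: hl; rewrite h expr0n => /esym/eqP.
  by rewrite !mulf_eq0 invr_eq0 (negbTE na0) (negbTE nal) (negbTE nbe).
have hs : s ^+ 2 = a0 * D / (2 * 'i * l * be) by rewrite /s /sv sqrtCK.
have ns : s != 0.
  apply/eqP => h; move: hs; rewrite h expr0n => /esym/eqP.
  by rewrite !mulf_eq0 invr_eq0 !mulf_eq0 (negbTE na0) (negbTE nD) (negbTE nl) (negbTE nbe)
    (negbTE two_neq0) (negbTE i_neq0).
have hs4 := s4_lem nl nbe hs.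
split => //; last first.
- by rewrite mulrC.
move=> x y.
have -> : (s * x + s * tau * y) ^+ 4 = s ^+ 4 * (x + tau * y) ^+ 4 by ring.
have -> : (l + a0 / l) / 2 * x ^+ 2 + - (l * (r1 + r2) + a0 * (r3 + r4) / l) / 2 * x * y +
      (l * (r1 * r2) + a0 * (r3 * r4) / l) / 2 * y ^+ 2 =
   (l * (x ^+ 2 - (r1 + r2) * x * y + r1 * r2 * y ^+ 2) +
    a0 * (x ^+ 2 - (r3 + r4) * x * y + r3 * r4 * y ^+ 2) / l) / 2.
  by field.
rewrite (rep_form nal nbe nl nD hl hs4).
  by ring.
have : al * (x ^+ 2 - (r1 + r2) * x * y + r1 * r2 * y ^+ 2) -
       be * (x ^+ 2 - (r3 + r4) * x * y + r3 * r4 * y ^+ 2) - D * (x + tau * y) ^+ 2 =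
       - Fs r1 r2 r3 r4 tau * y ^+ 2.
  by rewrite /al /be /alp /bet /D /Fs /Dp /Ep /Gp; ring.
rewrite hF oppr0 mul0r => /eqP; rewrite subr_eq0 => /eqP.
done.
Qed.

Lemma quad_roots (u0 u1 u2 x y : C) : x != y ->
  u0 * x ^+ 2 + u1 * x + u2 = 0 -> u0 * y ^+ 2 + u1 * y + u2 = 0 ->
  u1 = - (u0 * (x + y)) /\ u2 = u0 * (x * y).
Proof.
move=> nxy hx hy.
have h : (x - y) * (u0 * (x + y) + u1) = 0.
  by rewrite -[RHS](subrr 0) -{1}hx -hy; ring.
move/eqP: h; rewrite mulf_eq0 subr_eq0 (negbTE nxy) /= addrC addr_eq0 => /eqP h1.
split => //.
have -> : u2 = (u0 * x ^+ 2 + u1 * x + u2) - u0 * x ^+ 2 - u1 * x by ring.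
by rewrite hx h1; ring.
Qed.

Lemma three_roots (u0 u1 u2 x y z : C) : u0 != 0 -> x != y -> x != z -> y != z ->
  u0 * x ^+ 2 + u1 * x + u2 = 0 -> u0 * y ^+ 2 + u1 * y + u2 = 0 ->
  u0 * z ^+ 2 + u1 * z + u2 = 0 -> False.
Proof.
move=> nu nxy nxz nyz hx hy hz.
have [h1 h2] := quad_roots nxy hx hy.
move: hz; rewrite h1 h2.
have -> : u0 * z ^+ 2 + - (u0 * (x + y)) * z + u0 * (x * y) = u0 * (z - x) * (z - y) by ring.
move/eqP; rewrite !mulf_eq0 (negbTE nu) !subr_eq0 /= => /orP[] /eqP e.
  by move: nxz; rewrite e eqxx.
by move: nyz; rewrite e eqxx.
Qed.

Lemma pair_complete (r1 r2 r3 r4 u0 u1 u2 v0 v1 v2 t3 t4 : C) :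
  Dp r1 r2 r3 r4 != 0 -> r1 != r2 -> r3 != r4 -> u0 * v0 != 0 ->
  u0 * r1 ^+ 2 + u1 * r1 + u2 = 0 -> u0 * r2 ^+ 2 + u1 * r2 + u2 = 0 ->
  v0 * r3 ^+ 2 + v1 * r3 + v2 = 0 -> v0 * r4 ^+ 2 + v1 * r4 + v2 = 0 ->
  u0 - v0 = 2 * 'i * t3 ^+ 2 -> u1 - v1 = 4 * 'i * t3 * t4 -> u2 - v2 = 2 * 'i * t4 ^+ 2 ->
  t3 != 0 /\ Fs r1 r2 r3 r4 (t4 / t3) = 0.
Proof.
move=> nD n12 n34 nuv hu1 hu2 hv3 hv4 d0 d1 d2.
have [eu1 eu2] := quad_roots n12 hu1 hu2.
have [ev1 ev2] := quad_roots n34 hv3 hv4.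
have nt3 : t3 != 0.
  apply/eqP => t30.
  move: d0 d1; rewrite t30 expr0n !mulr0 !mul0r => /eqP; rewrite subr_eq0 => /eqP e0.
  rewrite eu1 ev1 e0 => /eqP.
  have -> : (- (v0 * (r1 + r2)) - - (v0 * (r3 + r4)) : C) = - (v0 * Dp r1 r2 r3 r4).
    by rewrite /Dp; ring.
  rewrite oppr_eq0 mulf_eq0 (negbTE nD) orbF => /eqP v00.
  by move: nuv; rewrite v00 mulr0 eqxx.
split => //.
have H : 2 * 'i * (Dp r1 r2 r3 r4 * t4 ^+ 2 + 2 * Ep r1 r2 r3 r4 * t3 * t4 + Gp r1 r2 r3 r4 * t3 ^+ 2) = 0.
  have -> : 2 * 'i * (Dp r1 r2 r3 r4 * t4 ^+ 2 + 2 * Ep r1 r2 r3 r4 * t3 * t4 + Gp r1 r2 r3 r4 * t3 ^+ 2)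
     = Dp r1 r2 r3 r4 * (2 * 'i * t4 ^+ 2) + Ep r1 r2 r3 r4 * (4 * 'i * t3 * t4)
       + Gp r1 r2 r3 r4 * (2 * 'i * t3 ^+ 2) by ring.
  rewrite -d0 -d1 -d2 eu1 eu2 ev1 ev2 /Dp /Ep /Gp; ring.
move/eqP: H; rewrite mulf_eq0 mulf_eq0 (negbTE two_neq0) (negbTE i_neq0) /= => /eqP H.
have -> : Fs r1 r2 r3 r4 (t4 / t3) =
  (Dp r1 r2 r3 r4 * t4 ^+ 2 + 2 * Ep r1 r2 r3 r4 * t3 * t4 + Gp r1 r2 r3 r4 * t3 ^+ 2) / t3 ^+ 2.
  by rewrite /Fs; field.
by rewrite H mul0r.
Qed.

Definition Hm (x1 x2 y1 y2 : C) := (x1 - y1) * (x2 - y2) + (x1 - y2) * (x2 - y1).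

Lemma Hm_dist1 (x1 x2 y1 y2 : C) : Hm x1 x2 y1 y2 = 0 -> x1 != x2 -> y1 != y2 -> x1 != y1.
Proof.
move=> h nx ny; apply/eqP => e; move: h; rewrite /Hm e subrr mul0r add0r => /eqP.
rewrite mulf_eq0 !subr_eq0 => /orP[/eqP e2|/eqP e2].
  by move: ny; rewrite e2 eqxx.
by move: nx; rewrite e e2 eqxx.
Qed.

Lemma Hm_dist (x1 x2 y1 y2 : C) : Hm x1 x2 y1 y2 = 0 -> x1 != x2 -> y1 != y2 ->
  [/\ x1 != y1, x1 != y2, x2 != y1 & x2 != y2].
Proof.
move=> h nx ny.
have h2 : Hm x1 x2 y2 y1 = 0 by rewrite -h /Hm; ring.
have h3 : Hm x2 x1 y1 y2 = 0 by rewrite -h /Hm; ring.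
have h4 : Hm x2 x1 y2 y1 = 0 by rewrite -h /Hm; ring.
rewrite eq_sym in nx; rewrite eq_sym in ny.
split; [apply: (Hm_dist1 h) | apply: (Hm_dist1 h2) | apply: (Hm_dist1 h3) | apply: (Hm_dist1 h4)];
  by rewrite // eq_sym.
Qed.

Lemma Hm_vieta (D1 E1 G1 D2 E2 G2 x1 x2 y1 y2 : C) : D1 != 0 -> D2 != 0 ->
  D1 * (x1 + x2) = - (2 * E1) -> D1 * (x1 * x2) = G1 ->
  D2 * (y1 + y2) = - (2 * E2) -> D2 * (y1 * y2) = G2 ->
  2 * E1 * E2 = G1 * D2 + G2 * D1 -> Hm x1 x2 y1 y2 = 0.
Proof.
move=> n1 n2 s1 p1 s2 p2 h.
have : D1 * D2 * Hm x1 x2 y1 y2 = 2 * (G1 * D2 + G2 * D1 - 2 * E1 * E2).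
  have -> : D1 * D2 * Hm x1 x2 y1 y2 =
     2 * (D1 * (x1 * x2)) * D2 + 2 * (D2 * (y1 * y2)) * D1 - (D1 * (x1 + x2)) * (D2 * (y1 + y2)).
    by rewrite /Hm; ring.
  by rewrite s1 p1 s2 p2; ring.
rewrite h subrr mulr0 => /eqP; rewrite !mulf_eq0 (negbTE n1) (negbTE n2) /= => /eqP.
done.
Qed.

Lemma octa (x1 x2 y1 y2 z1 z2 : C) : x1 != x2 -> y1 != y2 -> z1 != z2 ->
  Hm x1 x2 y1 y2 = 0 -> Hm x1 x2 z1 z2 = 0 -> Hm y1 y2 z1 z2 = 0 ->
  exists k : C, [/\ k * (x2 - x1) != 0, x1 + k * x2 = y1 * (1 + k),
     x1 - k * x2 = y2 * (1 - k) &
     (x1 + 'i * k * x2 = z1 * (1 + 'i * k) /\ x1 - 'i * k * x2 = z2 * (1 - 'i * k)) \/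
     (x1 + 'i * k * x2 = z2 * (1 + 'i * k) /\ x1 - 'i * k * x2 = z1 * (1 - 'i * k))].
Proof.
move=> nx ny nz hxy hxz hyz.
have [d11 d12 d21 d22] := Hm_dist hxy nx ny.
have [e11 e12 e21 e22] := Hm_dist hxz nx nz.
have n21 : x2 - y1 != 0 by rewrite subr_eq0.
have n22 : x2 - y2 != 0 by rewrite subr_eq0.
have m21 : x2 - z1 != 0 by rewrite subr_eq0.
have m22 : x2 - z2 != 0 by rewrite subr_eq0.
have n1 : y1 - x1 != 0 by rewrite subr_eq0 eq_sym.
have nx21 : x2 - x1 != 0 by rewrite subr_eq0 eq_sym.
set k := (y1 - x1) / (x2 - y1).
have nk : k != 0 by rewrite /k mulf_neq0 // invr_eq0.
exists k.
have ey1 : (y1 - x1) / (k * (x2 - y1)) = 1 by rewrite /k; field; fside.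
have ey2 : (y2 - x1) / (k * (x2 - y2)) = -1.
  have : ((y2 - x1) / (k * (x2 - y2)) + 1) * (k * (x2 - y2) * (x2 - y1)) = - Hm x1 x2 y1 y2.
    by rewrite /k /Hm; field; fside.
  have nzp : k * (x2 - y2) * (x2 - y1) != 0 by apply: mulf_neq0; [apply: mulf_neq0|].
  rewrite hxy oppr0 => /eqP; rewrite mulf_eq0 (negbTE nzp) orbF.
  by rewrite addr_eq0 => /eqP.
set w1 := (z1 - x1) / (k * (x2 - z1)).
set w2 := (z2 - x1) / (k * (x2 - z2)).
have ew : w2 = - w1.
  have : (w1 + w2) * (k * (x2 - z1) * (x2 - z2)) = - Hm x1 x2 z1 z2.
    by rewrite /w1 /w2 /Hm; field; fside.
  have nzp : k * (x2 - z1) * (x2 - z2) != 0 by apply: mulf_neq0; [apply: mulf_neq0|].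
  rewrite hxz oppr0 => /eqP; rewrite mulf_eq0 (negbTE nzp) orbF.
  by rewrite addr_eq0 => /eqP ->; rewrite opprK.
have key : Hm ((y1 - x1) / (k * (x2 - y1))) ((y2 - x1) / (k * (x2 - y2))) w1 w2 =
    (x2 - x1) ^+ 2 * Hm y1 y2 z1 z2 / (k ^+ 2 * (x2 - y1) * (x2 - y2) * (x2 - z1) * (x2 - z2)).
  by rewrite /w1 /w2 /Hm; field; fside.
rewrite ey1 ey2 ew hyz mulr0 mul0r /Hm in key.
have w1sq : w1 ^+ 2 = -1.
  have : -2 * (1 + w1 ^+ 2) = 0 by rewrite -key; ring.
  move/eqP; rewrite mulf_eq0 oppr_eq0 (negbTE two_neq0) /= addrC addr_eq0 => /eqP.
  done.
have hw1 : w1 = 'i \/ w1 = - 'i.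
  have : (w1 - 'i) * (w1 + 'i) = 0 by rewrite -subr_sqr w1sq sqrCi subrr.
  move/eqP; rewrite mulf_eq0 subr_eq0 addr_eq0 => /orP[/eqP|/eqP]; [left|right].
    done. done.
have ez1 : z1 - x1 = w1 * (k * (x2 - z1)) by rewrite /w1 divfK // mulf_neq0.
have ez2 : z2 - x1 = w2 * (k * (x2 - z2)) by rewrite /w2 divfK // mulf_neq0.
split.
- by rewrite mulf_neq0.
- by rewrite /k; field; fside.
- apply/eqP; rewrite -subr_eq0 -oppr_eq0; apply/eqP.
  have : ((y2 - x1) / (k * (x2 - y2)) + 1) * (k * (x2 - y2)) = 0 by rewrite ey2 addNr mul0r.
  by move=> h; rewrite -h; field; fside.
- case: hw1 => hw; rewrite hw in ez1; rewrite ew hw ?opprK in ez2; [left|right]; split.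
  + apply/eqP; rewrite -subr_eq0; apply/eqP; rewrite -[RHS](subrr (z1 - x1)) {1}ez1; ring.
  + apply/eqP; rewrite -subr_eq0; apply/eqP; rewrite -[RHS](subrr (z2 - x1)) {1}ez2; ring.
  + apply/eqP; rewrite -subr_eq0; apply/eqP; rewrite -[RHS](subrr (z2 - x1)) {1}ez2; ring.
  + apply/eqP; rewrite -subr_eq0; apply/eqP; rewrite -[RHS](subrr (z1 - x1)) {1}ez1; ring.
Qed.

Lemma pv_form (a : 'I_5 -> C) a0 r1 r2 r3 r4 :
  (forall x y, qeval a x y = a0 * (x - r1 * y) * (x - r2 * y) * (x - r3 * y) * (x - r4 * y)) ->
  forall z, pv a z = a0 * (z - r1) * (z - r2) * (z - r3) * (z - r4).
Proof.
move=> h z; have := h z 1; rewrite qevalE => e.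
by rewrite /pv; apply: (etrans _ (etrans e _)); ring.
Qed.

Lemma pair_facts (a : 'I_5 -> C) a0 r1 r2 r3 r4 tau :
  a0 != 0 -> Dp r1 r2 r3 r4 != 0 -> r1 != r2 -> r1 != r3 -> r1 != r4 -> r2 != r3 ->
  r2 != r4 -> r3 != r4 ->
  (forall x y, qeval a x y = a0 * (x - r1 * y) * (x - r2 * y) * (x - r3 * y) * (x - r4 * y)) ->
  Fs r1 r2 r3 r4 tau = 0 ->
  [/\ represents a (prep a0 r1 r2 r3 r4 tau), (prep a0 r1 r2 r3 r4 tau)@@3 != 0,
      (prep a0 r1 r2 r3 r4 tau)@@4 = tau * (prep a0 r1 r2 r3 r4 tau)@@3
    & pv a (- tau) != 0].
Proof.
move=> na0 nD n12 n13 n14 n23 n24 n34 hf hF.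
have [F n3 e4] := prep_ok na0 nD n12 n34 hF.
split => //.
  by move=> x y; rewrite hf F.
rewrite (pv_form hf).
have [f1 f2 f3 f4] := Fs_at r1 r2 r3 r4.
have ne : forall rr, Fs r1 r2 r3 r4 (- rr) != 0 -> - tau - rr != 0.
  move=> rr; apply: contra => /eqP h.
  have e : - rr = tau by apply/eqP; rewrite -subr_eq0 addrC h.
  by rewrite e hF.
rewrite !mulf_neq0 //; apply: ne.
- by rewrite f1 !mulf_neq0 // subr_eq0.
- by rewrite f2 !mulf_neq0 // subr_eq0 // eq_sym.
- by rewrite f3 oppr_eq0 !mulf_neq0 // subr_eq0 // eq_sym.
- by rewrite f4 oppr_eq0 !mulf_neq0 // subr_eq0 // eq_sym.
Qed.

Lemma harm_id r1 r2 r3 r4 :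
  [/\ 2 * Ep r1 r2 r3 r4 * Ep r1 r3 r2 r4 =
        Gp r1 r2 r3 r4 * Dp r1 r3 r2 r4 + Gp r1 r3 r2 r4 * Dp r1 r2 r3 r4,
      2 * Ep r1 r2 r3 r4 * Ep r1 r4 r2 r3 =
        Gp r1 r2 r3 r4 * Dp r1 r4 r2 r3 + Gp r1 r4 r2 r3 * Dp r1 r2 r3 r4
    & 2 * Ep r1 r3 r2 r4 * Ep r1 r4 r2 r3 =
        Gp r1 r3 r2 r4 * Dp r1 r4 r2 r3 + Gp r1 r4 r2 r3 * Dp r1 r3 r2 r4].
Proof. rewrite /Ep /Gp /Dp; split; ring. Qed.

Lemma det2 (R : comRingType) (M : 'M[R]_2) : \det M = M 0 0 * M 1 1 - M 0 1 * M 1 0.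
Proof.
rewrite (expand_det_row _ 0) !big_ord_recl big_ord0 addr0 /cofactor !det_mx11 /=.
rewrite !mxE /=.
have e1 : lift (0 : 'I_2) (0 : 'I_1) = 1 by apply/val_inj.
have e2 : lift (ord0 : 'I_2) (0 : 'I_1) = 1 by apply/val_inj.
have e3 : lift (ord0 : 'I_2) (ord0 : 'I_1) = 1 by apply/val_inj.
have e4 : lift (lift (ord0 : 'I_2) (ord0 : 'I_1)) (0 : 'I_1) = 0 by apply/val_inj.
have e5 : (ord0 : 'I_2) = 0 by apply/val_inj.
have e6 : lift (1 : 'I_2) (0 : 'I_1) = 0 by apply/val_inj.
rewrite ?e1 ?e2 ?e3 ?e4 ?e5 /= ?expr0 ?expr1 e6; ring.
Qed.

Definition mx2 (m00 m01 m10 m11 : C) : 'M[C]_2 :=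
  \matrix_(i, j) (if i == 0 then (if j == 0 then m00 else m01) else (if j == 0 then m10 else m11)).
Lemma mx2E (m00 m01 m10 m11 : C) :
  [/\ mx2 m00 m01 m10 m11 0 0 = m00, mx2 m00 m01 m10 m11 0 1 = m01,
      mx2 m00 m01 m10 m11 1 0 = m10 & mx2 m00 m01 m10 m11 1 1 = m11].
Proof. by rewrite /mx2 !mxE. Qed.

Lemma proj_help (s tau m1 m2 : C) : m2 = tau * m1 -> proj_eq (s, tau * s) (m1, m2).
Proof. by rewrite /proj_eq /= => ->; ring. Qed.

Definition PROP (a : 'I_5 -> C) : Prop :=
    exists r : 'I_6 -> 'I_5 -> C,
      (forall k, represents a (r k)) /\
      (forall k l, k != l -> ~ same_rep (r k) (r l)) /\
      (forall t, represents a t -> exists k, same_rep t (r k)) /\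
      (forall k, (r k (inord 3), r k (inord 4)) != (0, 0)) /\
      exists M : 'M[C]_2, \det M != 0 /\
        (forall k, exists j, proj_eq (r k (inord 3), r k (inord 4)) (mob_act M (six_pts C j))) /\
        (forall j, exists k, proj_eq (r k (inord 3), r k (inord 4)) (mob_act M (six_pts C j))).

Lemma core (a : 'I_5 -> C) (a0 r1 r2 r3 r4 : C) :
  a0 != 0 -> r1 != r2 -> r1 != r3 -> r1 != r4 -> r2 != r3 -> r2 != r4 -> r3 != r4 ->
  Dp r1 r2 r3 r4 != 0 -> Dp r1 r3 r2 r4 != 0 -> Dp r1 r4 r2 r3 != 0 ->
  (forall x y, qeval a x y = a0 * (x - r1 * y) * (x - r2 * y) * (x - r3 * y) * (x - r4 * y)) ->
  PROP a.
Proof.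
move=> na0 n12 n13 n14 n23 n24 n34 nDA nDB nDC hA.
have n21 : r2 != r1 by rewrite eq_sym.
have n31 : r3 != r1 by rewrite eq_sym.
have n41 : r4 != r1 by rewrite eq_sym.
have n32 : r3 != r2 by rewrite eq_sym.
have n42 : r4 != r2 by rewrite eq_sym.
have n43 : r4 != r3 by rewrite eq_sym.
have hB : forall x y, qeval a x y = a0 * (x - r1 * y) * (x - r3 * y) * (x - r2 * y) * (x - r4 * y).
  by move=> x y; rewrite hA; ring.
have hC : forall x y, qeval a x y = a0 * (x - r1 * y) * (x - r4 * y) * (x - r2 * y) * (x - r3 * y).
  by move=> x y; rewrite hA; ring.
have d12 : r1 - r2 != 0 by rewrite subr_eq0.
have d13 : r1 - r3 != 0 by rewrite subr_eq0.
have d14 : r1 - r4 != 0 by rewrite subr_eq0.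
have d21 : r2 - r1 != 0 by rewrite subr_eq0.
have d23 : r2 - r3 != 0 by rewrite subr_eq0.
have d24 : r2 - r4 != 0 by rewrite subr_eq0.
have d31 : r3 - r1 != 0 by rewrite subr_eq0.
have d32 : r3 - r2 != 0 by rewrite subr_eq0.
have d34 : r3 - r4 != 0 by rewrite subr_eq0.
have d41 : r4 - r1 != 0 by rewrite subr_eq0.
have d42 : r4 - r2 != 0 by rewrite subr_eq0.
have d43 : r4 - r3 != 0 by rewrite subr_eq0.
have [FA1 FA2 nA sA pA] := Fs_roots nDA (mulf_neq0 (mulf_neq0 (mulf_neq0 d13 d14) d23) d24).
have [FB1 FB2 nB sB pB] := Fs_roots nDB (mulf_neq0 (mulf_neq0 (mulf_neq0 d12 d14) d32) d34).
have [FC1 FC2 nC sC pC] := Fs_roots nDC (mulf_neq0 (mulf_neq0 (mulf_neq0 d12 d13) d42) d43).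
set tA1 := taup r1 r2 r3 r4 in FA1 nA sA pA *.
set tA2 := taum r1 r2 r3 r4 in FA2 nA sA pA *.
set tB1 := taup r1 r3 r2 r4 in FB1 nB sB pB *.
set tB2 := taum r1 r3 r2 r4 in FB2 nB sB pB *.
set tC1 := taup r1 r4 r2 r3 in FC1 nC sC pC *.
set tC2 := taum r1 r4 r2 r3 in FC2 nC sC pC *.
have [RA1 zA1 eA1 pvA1] := pair_facts na0 nDA n12 n13 n14 n23 n24 n34 hA FA1.
have [RA2 zA2 eA2 pvA2] := pair_facts na0 nDA n12 n13 n14 n23 n24 n34 hA FA2.
have [RB1 zB1 eB1 pvB1] := pair_facts na0 nDB n13 n12 n14 n32 n34 n24 hB FB1.
have [RB2 zB2 eB2 pvB2] := pair_facts na0 nDB n13 n12 n14 n32 n34 n24 hB FB2.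
have [RC1 zC1 eC1 pvC1] := pair_facts na0 nDC n14 n12 n13 n42 n43 n23 hC FC1.
have [RC2 zC2 eC2 pvC2] := pair_facts na0 nDC n14 n12 n13 n42 n43 n23 hC FC2.
have [iAB iAC iBC] := harm_id r1 r2 r3 r4.
have hAB := Hm_vieta nDA nDB sA pA sB pB iAB.
have hAC := Hm_vieta nDA nDC sA pA sC pC iAC.
have hBC := Hm_vieta nDB nDC sB pB sC pC iBC.
have [k [nk ey1 ey2 ez]] := octa nA nB nC hAB hAC hBC.
have [u11 u12 u21 u22] := Hm_dist hAB nA nB.
have [v11 v12 v21 v22] := Hm_dist hAC nA nC.
have [w11 w12 w21 w22] := Hm_dist hBC nB nC.
pose ts := [:: tA1; tA2; tB1; tB2; tC1; tC2].
have uts : uniq ts.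
  rewrite /ts /= !inE !negb_or.
  by rewrite nA u11 u12 v11 v12 u21 u22 v21 v22 nB w11 w12 w21 w22 nC.
pose rs := [:: prep a0 r1 r2 r3 r4 tA1; prep a0 r1 r2 r3 r4 tA2;
               prep a0 r1 r3 r2 r4 tB1; prep a0 r1 r3 r2 r4 tB2;
               prep a0 r1 r4 r2 r3 tC1; prep a0 r1 r4 r2 r3 tC2].
pose r := fun kk : 'I_6 => nth (prep a0 r1 r2 r3 r4 tA1) rs kk.
pose tk := fun kk : 'I_6 => nth 0 ts kk.
have Hk : forall kk : 'I_6, [/\ represents a (r kk), (r kk)@@3 != 0,
    (r kk)@@4 = tk kk * (r kk)@@3 & pv a (- tk kk) != 0].
  by case=> [[|[|[|[|[|[|?]]]]]] ?] //=; split.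
have tk_inj : forall k1 k2 : 'I_6, tk k1 = tk k2 -> k1 = k2.
  move=> k1 k2 e; apply/val_inj/eqP.
  by rewrite -(nth_uniq 0 _ _ uts) ?(ltn_ord k1) ?(ltn_ord k2) //; apply/eqP.
exists r; split.
  by move=> kk; case: (Hk kk).
split.
  move=> k1 k2 nk12 [eps [zeta [_ [_ [_ [_ [_ [h3 h4]]]]]]]].
  case: (Hk k1) => _ z1 e1 _; case: (Hk k2) => _ z2 e2 _.
  move/negP: nk12; apply; apply/eqP; apply: tk_inj.
  have : tk k2 * (r k2)@@3 = tk k1 * (r k2)@@3.
    by rewrite -e2 h4 e1 h3; ring.
  by move/(mulIf z2).
split.
  move=> t Ht.
  have [e0 e1 e2 e3 e4] := repE Ht.
  have fin : forall kk : 'I_6, t@@3 != 0 -> t@@4 / t@@3 = tk kk -> exists kk, same_rep t (r kk).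
    move=> kk nz ek; exists kk; case: (Hk kk) => Rk _ ek4 pk.
    by apply: (uniq_rep Ht Rk nz _ ek4 pk); rewrite -ek divfK.
  have finX : forall k1 k2 : 'I_6, forall D ta tb, D != 0 -> t@@3 != 0 ->
      D * (t@@4 / t@@3 - ta) * (t@@4 / t@@3 - tb) = 0 -> tk k1 = ta -> tk k2 = tb ->
      exists kk, same_rep t (r kk).
    move=> k1 k2 D ta tb nD nz /eqP; rewrite !mulf_eq0 (negbTE nD) /= !subr_eq0.
    case/orP => /eqP h e1' e2'; [apply: (fin k1) | apply: (fin k2)]; by rewrite // h.
  have finA : t@@3 != 0 -> Fs r1 r2 r3 r4 (t@@4 / t@@3) = 0 -> exists kk, same_rep t (r kk).
    move=> nz; rewrite (Fs_fact _ nDA) => h.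
    exact: (finX (@Ordinal 6 0 isT) (@Ordinal 6 1 isT) _ _ _ nDA nz h).
  have finB : t@@3 != 0 -> Fs r1 r3 r2 r4 (t@@4 / t@@3) = 0 -> exists kk, same_rep t (r kk).
    move=> nz; rewrite (Fs_fact _ nDB) => h.
    exact: (finX (@Ordinal 6 2 isT) (@Ordinal 6 3 isT) _ _ _ nDB nz h).
  have finC : t@@3 != 0 -> Fs r1 r4 r2 r3 (t@@4 / t@@3) = 0 -> exists kk, same_rep t (r kk).
    move=> nz; rewrite (Fs_fact _ nDC) => h.
    exact: (finX (@Ordinal 6 4 isT) (@Ordinal 6 5 isT) _ _ _ nDC nz h).
  set u0 := t@@0 + 'i * t@@3 ^+ 2; set u1 := t@@1 + 2 * 'i * t@@3 * t@@4;
  set u2 := t@@2 + 'i * t@@4 ^+ 2.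
  set v0 := t@@0 - 'i * t@@3 ^+ 2; set v1 := t@@1 - 2 * 'i * t@@3 * t@@4;
  set v2 := t@@2 - 'i * t@@4 ^+ 2.
  have UV : forall z, (u0 * z ^+ 2 + u1 * z + u2) * (v0 * z ^+ 2 + v1 * z + v2) =
      a0 * (z - r1) * (z - r2) * (z - r3) * (z - r4).
    move=> z; rewrite -(pv_form hA).
    have -> : (u0 * z ^+ 2 + u1 * z + u2) * (v0 * z ^+ 2 + v1 * z + v2) =
        pv a z - ('i ^+ 2 + 1) * (t@@3 * z + t@@4) ^+ 4.
      by rewrite /pv e0 e1 e2 e3 e4 /u0 /u1 /u2 /v0 /v1 /v2; ring.
    by rewrite sqrCi addNr mul0r subr0.
  have uv0 : u0 * v0 != 0.
    have ha0 : a@@0 = a0.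
      have := hA 1 0; rewrite qevalE => e.
      by apply: (etrans _ (etrans e _)); ring.
    have -> : u0 * v0 = a@@0 - ('i ^+ 2 + 1) * t@@3 ^+ 4 by rewrite e0 /u0 /v0; ring.
    by rewrite sqrCi addNr mul0r subr0 ha0.
  have nu0 : u0 != 0 by move: uv0; rewrite mulf_eq0 negb_or => /andP[].
  have nv0 : v0 != 0 by move: uv0; rewrite mulf_eq0 negb_or => /andP[].
  have dd0 : u0 - v0 = 2 * 'i * t@@3 ^+ 2 by rewrite /u0 /v0; ring.
  have dd1 : u1 - v1 = 4 * 'i * t@@3 * t@@4 by rewrite /u1 /v1; ring.
  have dd2 : u2 - v2 = 2 * 'i * t@@4 ^+ 2 by rewrite /u2 /v2; ring.
  have root : forall rr, rr = r1 \/ rr = r2 \/ rr = r3 \/ rr = r4 ->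
      u0 * rr ^+ 2 + u1 * rr + u2 = 0 \/ v0 * rr ^+ 2 + v1 * rr + v2 = 0.
    move=> rr hr.
    have : (u0 * rr ^+ 2 + u1 * rr + u2) * (v0 * rr ^+ 2 + v1 * rr + v2) == 0.
      by rewrite UV; case: hr => [->|[->|[->|->]]]; rewrite subrr ?mulr0 ?mul0r.
    by rewrite mulf_eq0 => /orP[/eqP|/eqP]; [left|right].
  have nDA' : Dp r3 r4 r1 r2 != 0.
    by rewrite (_ : Dp r3 r4 r1 r2 = - Dp r1 r2 r3 r4) ?oppr_eq0 // /Dp; ring.
  have nDB' : Dp r2 r4 r1 r3 != 0.
    by rewrite (_ : Dp r2 r4 r1 r3 = - Dp r1 r3 r2 r4) ?oppr_eq0 // /Dp; ring.
  have nDC' : Dp r2 r3 r1 r4 != 0.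
    by rewrite (_ : Dp r2 r3 r1 r4 = - Dp r1 r4 r2 r3) ?oppr_eq0 // /Dp; ring.
  case: (root r1 (or_introl erefl)) => h1;
  case: (root r2 (or_intror (or_introl erefl))) => h2;
  case: (root r3 (or_intror (or_intror (or_introl erefl)))) => h3;
  case: (root r4 (or_intror (or_intror (or_intror erefl)))) => h4.
  - by case: (three_roots nu0 n12 n13 n23 h1 h2 h3).
  - by case: (three_roots nu0 n12 n13 n23 h1 h2 h3).
  - by case: (three_roots nu0 n12 n14 n24 h1 h2 h4).
  - have [nz F] := pair_complete nDA n12 n34 uv0 h1 h2 h3 h4 dd0 dd1 dd2.
    exact: finA nz F.
  - by case: (three_roots nu0 n13 n14 n34 h1 h3 h4).
  - have [nz F] := pair_complete nDB n13 n24 uv0 h1 h3 h2 h4 dd0 dd1 dd2.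
    exact: finB nz F.
  - have [nz F] := pair_complete nDC n14 n23 uv0 h1 h4 h2 h3 dd0 dd1 dd2.
    exact: finC nz F.
  - by case: (three_roots nv0 n23 n24 n34 h2 h3 h4).
  - by case: (three_roots nu0 n23 n24 n34 h2 h3 h4).
  - have [nz F] := pair_complete nDC' n23 n14 uv0 h2 h3 h1 h4 dd0 dd1 dd2.
    move: F; rewrite (Fs_swap r1 r4 r2 r3) => /eqP; rewrite oppr_eq0 => /eqP F.
    exact: finC nz F.
  - have [nz F] := pair_complete nDB' n24 n13 uv0 h2 h4 h1 h3 dd0 dd1 dd2.
    move: F; rewrite (Fs_swap r1 r3 r2 r4) => /eqP; rewrite oppr_eq0 => /eqP F.
    exact: finB nz F.
  - by case: (three_roots nv0 n13 n14 n34 h1 h3 h4).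
  - have [nz F] := pair_complete nDA' n34 n12 uv0 h3 h4 h1 h2 dd0 dd1 dd2.
    move: F; rewrite (Fs_swap r1 r2 r3 r4) => /eqP; rewrite oppr_eq0 => /eqP F.
    exact: finA nz F.
  - by case: (three_roots nv0 n12 n14 n24 h1 h2 h4).
  - by case: (three_roots nv0 n12 n13 n23 h1 h2 h3).
  - by case: (three_roots nv0 n12 n13 n23 h1 h2 h3).
split.
  by move=> kk; case: (Hk kk) => _ nz _ _; rewrite xpair_eqE negb_and nz.
exists (mx2 1 k tA1 (k * tA2)).
have [m00 m01 m10 m11] := mx2E 1 k tA1 (k * tA2).
split.
  by rewrite det2 m00 m01 m10 m11 (_ : 1 * (k * tA2) - k * tA1 = k * (tA2 - tA1)) //; ring.
have pj : forall (kk j : 'I_6),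
    (mob_act (mx2 1 k tA1 (k * tA2)) (six_pts C j)).2 =
      tk kk * (mob_act (mx2 1 k tA1 (k * tA2)) (six_pts C j)).1 ->
    proj_eq (r kk (inord 3), r kk (inord 4)) (mob_act (mx2 1 k tA1 (k * tA2)) (six_pts C j)).
  move=> kk j; case: (Hk kk) => _ _ e4 _; rewrite e4.
  by case: (mob_act _ _) => m1 m2 /= h; apply: proj_help.
have J0 : (mob_act (mx2 1 k tA1 (k * tA2)) (six_pts C (@Ordinal 6 0 isT))).2 =
   tA1 * (mob_act (mx2 1 k tA1 (k * tA2)) (six_pts C (@Ordinal 6 0 isT))).1.
  by rewrite /mob_act /six_pts /= m00 m01 m10 m11; ring.
have J1 : (mob_act (mx2 1 k tA1 (k * tA2)) (six_pts C (@Ordinal 6 1 isT))).2 =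
   tA2 * (mob_act (mx2 1 k tA1 (k * tA2)) (six_pts C (@Ordinal 6 1 isT))).1.
  by rewrite /mob_act /six_pts /= m00 m01 m10 m11; ring.
have J2 : (mob_act (mx2 1 k tA1 (k * tA2)) (six_pts C (@Ordinal 6 2 isT))).2 =
   tB1 * (mob_act (mx2 1 k tA1 (k * tA2)) (six_pts C (@Ordinal 6 2 isT))).1.
  by rewrite /mob_act /six_pts /= m00 m01 m10 m11; apply: (etrans _ (etrans ey1 _)); ring.
have J3 : (mob_act (mx2 1 k tA1 (k * tA2)) (six_pts C (@Ordinal 6 3 isT))).2 =
   tB2 * (mob_act (mx2 1 k tA1 (k * tA2)) (six_pts C (@Ordinal 6 3 isT))).1.
  by rewrite /mob_act /six_pts /= m00 m01 m10 m11; apply: (etrans _ (etrans ey2 _)); ring.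
have J45 : forall zz1 zz2, tA1 + 'i * k * tA2 = zz1 * (1 + 'i * k) ->
    tA1 - 'i * k * tA2 = zz2 * (1 - 'i * k) ->
   (mob_act (mx2 1 k tA1 (k * tA2)) (six_pts C (@Ordinal 6 4 isT))).2 =
     zz1 * (mob_act (mx2 1 k tA1 (k * tA2)) (six_pts C (@Ordinal 6 4 isT))).1 /\
   (mob_act (mx2 1 k tA1 (k * tA2)) (six_pts C (@Ordinal 6 5 isT))).2 =
     zz2 * (mob_act (mx2 1 k tA1 (k * tA2)) (six_pts C (@Ordinal 6 5 isT))).1.
  move=> zz1 zz2 h1 h2; rewrite /mob_act /six_pts /= m00 m01 m10 m11; split.
    by apply: (etrans _ (etrans h1 _)); ring.
  by apply: (etrans _ (etrans h2 _)); ring.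
case: ez => [[h1 h2]|[h1 h2]].
- have [J4 J5] := J45 _ _ h1 h2.
  split.
    case=> [[|[|[|[|[|[|?]]]]]] ?] //.
    + by exists (@Ordinal 6 0 isT); apply: pj.
    + by exists (@Ordinal 6 1 isT); apply: pj.
    + by exists (@Ordinal 6 2 isT); apply: pj.
    + by exists (@Ordinal 6 3 isT); apply: pj.
    + by exists (@Ordinal 6 4 isT); apply: pj.
    + by exists (@Ordinal 6 5 isT); apply: pj.
  case=> [[|[|[|[|[|[|?]]]]]] ?] //.
  + by exists (@Ordinal 6 0 isT); apply: pj.
  + by exists (@Ordinal 6 1 isT); apply: pj.
  + by exists (@Ordinal 6 2 isT); apply: pj.
  + by exists (@Ordinal 6 3 isT); apply: pj.
  + by exists (@Ordinal 6 4 isT); apply: pj.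
  + by exists (@Ordinal 6 5 isT); apply: pj.
- have [J4 J5] := J45 _ _ h1 h2.
  split.
    case=> [[|[|[|[|[|[|?]]]]]] ?] //.
    + by exists (@Ordinal 6 0 isT); apply: pj.
    + by exists (@Ordinal 6 1 isT); apply: pj.
    + by exists (@Ordinal 6 2 isT); apply: pj.
    + by exists (@Ordinal 6 3 isT); apply: pj.
    + by exists (@Ordinal 6 5 isT); apply: pj.
    + by exists (@Ordinal 6 4 isT); apply: pj.
  case=> [[|[|[|[|[|[|?]]]]]] ?] //.
  + by exists (@Ordinal 6 0 isT); apply: pj.
  + by exists (@Ordinal 6 1 isT); apply: pj.
  + by exists (@Ordinal 6 2 isT); apply: pj.
  + by exists (@Ordinal 6 3 isT); apply: pj.
  + by exists (@Ordinal 6 5 isT); apply: pj.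
  + by exists (@Ordinal 6 4 isT); apply: pj.
Qed.

Definition V0 : poly5 C := 'X%:P%:P%:P%:P.
Definition V1 : poly5 C := 'X%:P%:P%:P.
Definition V2 : poly5 C := 'X%:P%:P.
Definition V3 : poly5 C := 'X%:P.
Definition V4 : poly5 C := 'X.
Lemma eval5D (f g : poly5 C) a : eval5 (f + g) a = eval5 f a + eval5 g a.
Proof. by rewrite /eval5 !hornerD. Qed.
Lemma eval5M (f g : poly5 C) a : eval5 (f * g) a = eval5 f a * eval5 g a.
Proof. by rewrite /eval5 !hornerM. Qed.
Lemma eval5N (f : poly5 C) a : eval5 (- f) a = - eval5 f a.
Proof. by rewrite /eval5 !hornerN. Qed.
Lemma eval5_1 a : eval5 (1 : poly5 C) a = 1.
Proof.
by rewrite /eval5 -polyC1 hornerC -polyC1 hornerC -polyC1 hornerC -polyC1 hornerC -polyC1 hornerC.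
Qed.
Lemma eval5V a : [/\ eval5 V0 a = a@@0, eval5 V1 a = a@@1, eval5 V2 a = a@@2,
   eval5 V3 a = a@@3 & eval5 V4 a = a@@4].
Proof. by rewrite /eval5 /V0 /V1 /V2 /V3 /V4; split; do ![rewrite hornerC | rewrite hornerX]. Qed.

Definition fpoly : poly5 C := fG V0 V1 V2 V3 V4.

Lemma eval_fpoly a : eval5 fpoly a = fG a@@0 a@@1 a@@2 a@@3 a@@4.
Proof.
have [v0 v1 v2 v3 v4] := eval5V a.
rewrite /fpoly (@hom_fG _ _ (fun f => eval5 f a)).
- by rewrite v0 v1 v2 v3 v4.
- by move=> x y; apply: eval5D.
- by move=> x; apply: eval5N.
- by move=> x y; apply: eval5M.
- by apply: eval5_1.
Qed.

Lemma IJE (a0 r1 r2 r3 r4 : C) :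
  4 * IG a0 (- a0 * (r1+r2+r3+r4)) (a0 * (r1*r2+r1*r3+r1*r4+r2*r3+r2*r4+r3*r4))
   (- a0 * (r1*r2*r3+r1*r2*r4+r1*r3*r4+r2*r3*r4)) (a0*(r1*r2*r3*r4)) ^+ 3
  - JG a0 (- a0 * (r1+r2+r3+r4)) (a0 * (r1*r2+r1*r3+r1*r4+r2*r3+r2*r4+r3*r4))
   (- a0 * (r1*r2*r3+r1*r2*r4+r1*r3*r4+r2*r3*r4)) (a0*(r1*r2*r3*r4)) ^+ 2 =
  27 * a0^+6 * ((r1-r2)*(r1-r3)*(r1-r4)*(r2-r3)*(r2-r4)*(r3-r4))^+2.
Proof. rewrite /IG /JG; ring. Qed.

Lemma RGE (a0 r1 r2 r3 r4 : C) :
  RG a0 (- a0 * (r1+r2+r3+r4)) (a0 * (r1*r2+r1*r3+r1*r4+r2*r3+r2*r4+r3*r4))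
   (- a0 * (r1*r2*r3+r1*r2*r4+r1*r3*r4+r2*r3*r4)) =
  a0 ^+ 3 * (Dp r1 r2 r3 r4 * Dp r1 r3 r2 r4 * Dp r1 r4 r2 r3).
Proof. rewrite /RG /Dp; ring. Qed.

End S.

Section S2.
Variable C : numClosedFieldType.
Local Notation "t '@@' k" := (t (@inord 4 k)) (at level 8, k at level 0, format "t @@ k").
Lemma fpoly_neq0 : fpoly C != 0.
Proof.
apply/eqP => h.
pose r1 : C := 0%:R; pose r2 : C := 1%:R; pose r3 : C := 2%:R; pose r4 : C := 4%:R.
pose a := mk5 1 (- 1 * (r1+r2+r3+r4)) (1 * (r1*r2+r1*r3+r1*r4+r2*r3+r2*r4+r3*r4))
   (- 1 * (r1*r2*r3+r1*r2*r4+r1*r3*r4+r2*r3*r4)) (1*(r1*r2*r3*r4)).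
have := eval_fpoly a; rewrite h.
have -> : eval5 (0 : poly5 C) a = 0 by rewrite /eval5 !horner0.
have [e0 e1 e2 e3 e4] := mk5E 1 (- 1 * (r1+r2+r3+r4)) (1 * (r1*r2+r1*r3+r1*r4+r2*r3+r2*r4+r3*r4))
   (- 1 * (r1*r2*r3+r1*r2*r4+r1*r3*r4+r2*r3*r4)) (1*(r1*r2*r3*r4)).
rewrite /a e0 e1 e2 e3 e4 /fG IJE RGE => /esym/eqP.
have nd : forall n m, n != m -> (n%:R - m%:R : C) != 0.
  by move=> n m nm; rewrite subr_eq0 eqr_nat.
rewrite !expr1n !mul1r !mulr1; apply/negP.
apply: mulf_neq0; first apply: mulf_neq0.
- by rewrite pnatr_eq0.
- apply: expf_neq0.
  by rewrite !mulf_neq0 // /r1 /r2 /r3 /r4 nd.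
- rewrite /Dp /r1 /r2 /r3 /r4 -!natrD.
  by rewrite !mulf_neq0 // nd.
Qed.


Lemma main_generic (a : 'I_5 -> C) : fG a@@0 a@@1 a@@2 a@@3 a@@4 != 0 -> PROP a.
Proof.
rewrite /fG => hf.
have na0 : a@@0 != 0 by move: hf; rewrite !mulf_eq0 !negb_or => /andP[/andP[]].
have nI : 4 * IG a@@0 a@@1 a@@2 a@@3 a@@4 ^+ 3 - JG a@@0 a@@1 a@@2 a@@3 a@@4 ^+ 2 != 0.
  by move: hf; rewrite !mulf_eq0 !negb_or => /andP[/andP[]].
have nR : RG a@@0 a@@1 a@@2 a@@3 != 0.
  by move: hf; rewrite !mulf_eq0 !negb_or => /andP[/andP[]].
have [r1 [r2 [r3 [r4 hz]]]] := roots4 (a@@1 / a@@0) (a@@2 / a@@0) (a@@3 / a@@0) (a@@4 / a@@0).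
destruct (@poly4_0 _ 0 (a@@1 / a@@0 + (r1+r2+r3+r4))
   (a@@2 / a@@0 - (r1*r2+r1*r3+r1*r4+r2*r3+r2*r4+r3*r4))
   (a@@3 / a@@0 + (r1*r2*r3+r1*r2*r4+r1*r3*r4+r2*r3*r4))
   (a@@4 / a@@0 - (r1*r2*r3*r4))) as [_ c1 c2 c3 c4].
  by move=> z; apply: (eq_sub0 (hz z)); ring.
have ha1 : a@@1 = - a@@0 * (r1+r2+r3+r4).
  have e : a@@1 / a@@0 = - (r1+r2+r3+r4) by apply/eqP; rewrite -addr_eq0 c1.
  by rewrite -[a@@1](divfK na0) e; ring.
have ha2 : a@@2 = a@@0 * (r1*r2+r1*r3+r1*r4+r2*r3+r2*r4+r3*r4).
  have e : a@@2 / a@@0 = (r1*r2+r1*r3+r1*r4+r2*r3+r2*r4+r3*r4) by apply/eqP; rewrite -subr_eq0 c2.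
  by rewrite -[a@@2](divfK na0) e; ring.
have ha3 : a@@3 = - a@@0 * (r1*r2*r3+r1*r2*r4+r1*r3*r4+r2*r3*r4).
  have e : a@@3 / a@@0 = - (r1*r2*r3+r1*r2*r4+r1*r3*r4+r2*r3*r4) by apply/eqP; rewrite -addr_eq0 c3.
  by rewrite -[a@@3](divfK na0) e; ring.
have ha4 : a@@4 = a@@0 * (r1*r2*r3*r4).
  have e : a@@4 / a@@0 = (r1*r2*r3*r4) by apply/eqP; rewrite -subr_eq0 c4.
  by rewrite -[a@@4](divfK na0) e; ring.
rewrite ha1 ha2 ha3 ha4 IJE in nI; rewrite ha1 ha2 ha3 RGE in nR.
have hp : (r1-r2)*(r1-r3)*(r1-r4)*(r2-r3)*(r2-r4)*(r3-r4) != 0.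
  by apply: contra nI => /eqP ->; rewrite expr0n /= mulr0.
move: hp; rewrite !mulf_eq0 !negb_or !subr_eq0.
case/andP=> /andP[/andP[/andP[/andP[n12 n13] n14] n23] n24] n34.
move: nR; rewrite !mulf_eq0 !negb_or.
case/andP=> _ /andP[/andP[nDA nDB] nDC].
apply: (core na0 n12 n13 n14 n23 n24 n34 nDA nDB nDC).
by move=> x y; rewrite qevalE ha1 ha2 ha3 ha4; ring.
Qed.

End S2.

Unset Implicit Arguments.

Theorem theorem4p6 (C : numClosedFieldType) :
  general (fun a : 'I_5 -> C =>
    exists r : 'I_6 -> 'I_5 -> C,
      (* six representations *)
      (forall k, represents a (r k)) /\
      (* pairwise different *)
      (forall k l, k != l -> ~ same_rep (r k) (r l)) /\
      (* and no others *)
      (forall t, represents a t -> exists k, same_rep t (r k)) /\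
      (* the ratios t5/t4 are well defined points of P^1 ... *)
      (forall k, (r k (inord 3), r k (inord 4)) != (0, 0)) /\
      (* ... and form the Moebius image of {0, oo, 1, -1, i, -i} *)
      exists M : 'M[C]_2, \det M != 0 /\
        (forall k, exists j, proj_eq (r k (inord 3), r k (inord 4)) (mob_act M (six_pts C j))) /\
        (forall j, exists k, proj_eq (r k (inord 3), r k (inord 4)) (mob_act M (six_pts C j)))).
Proof.
exists (fpoly C); split; first exact: fpoly_neq0.
move=> a; rewrite eval_fpoly => h; exact: main_generic.
Qed.
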